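(* For all positive integers $n$ and $k$ with $n\ge k$, $\log\log(d_n+1) \le n+\log\log(d_k+1)-k$.
   Context: All logarithms $\log$ are to base $2$. A delta-matroid $(E,\mathcal F)$ consists of a finite ground set $E$ and a non-empty collection $\mathcal F$ of subsets of $E$ (the feasible sets) satisfying the symmetric exchange axiom: for all $X,Y\in\mathcal F$ and every $e\in X\triangle Y$ there exists $f\in X\triangle Y$ (possibly $f=e$) with $X\triangle\{e,f\}\in\mathcal F$. Let $d_n$ denote the number of labelled delta-matroids with ground set $[n]=\{1,\dots,n\}$, i.e. the number of collections $\mathcal F$ of subsets of $[n]$ such that $([n],\mathcal F)$ is a delta-matroid. *)

(* Defs.v *)
From mathcomp Require Import all_boot.
From Stdlib Require Import Reals.

Set Implicit Arguments.
Unset Strict Implicit.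
Unset Printing Implicit Defensive.

Definition symdiff (T : finType) (X Y : {set T}) : {set T} := (X :\: Y) :|: (Y :\: X).

(* (E, F) is a delta-matroid, with E = the full finite type T:
   F non-empty and the symmetric exchange axiom holds. *)
Definition is_delta_matroid (T : finType) (F : {set {set T}}) : bool :=
  (F != set0) &&
  [forall X in F, forall Y in F, forall e in symdiff X Y,
     exists f in symdiff X Y, symdiff X [set e; f] \in F].

Definition num_delta_matroids (n : nat) : nat :=
  #|[set F : {set {set 'I_n}} | is_delta_matroid F]|.

Definition log2 (x : R) : R := ln x / ln 2.

(* Main.v *)
Require Import Defs.
From mathcomp Require Import all_boot.
From Stdlib Require Import Reals Lra.

Section Comb.
Variable n : nat.

Definition pr (Z : {set 'I_n.+1}) : {set 'I_n} := [set i | lift ord_max i \in Z].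

Definition Fb (b : bool) (F : {set {set 'I_n.+1}}) : {set {set 'I_n}} :=
  [set pr Z | Z in [set Z in F | (ord_max \in Z) == b]].

Lemma pr_inj Z W : pr Z = pr W -> (ord_max \in Z) = (ord_max \in W) -> Z = W.
Proof.
move=> /setP H Hm; apply/setP=> i.
case: (unliftP ord_max i) => [j ->| ->] //.
by have := H j; rewrite !inE.
Qed.

Lemma inF_Fb (F : {set {set 'I_n.+1}}) Z :
  (Z \in F) = (pr Z \in Fb (ord_max \in Z) F).
Proof.
apply/idP/idP => [HZ|/imsetP [W]].
  by apply/imsetP; exists Z => //; rewrite inE HZ eqxx.
rewrite inE => /andP [HW /eqP Hm] Hpr.
by rewrite (@pr_inj Z W) // Hm.
Qed.

Lemma phi_inj : injective (fun F => (Fb false F, Fb true F)).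
Proof.
move=> F G [H0 H1]; apply/setP=> Z.
rewrite (inF_Fb F) (inF_Fb G).
by case: (ord_max \in Z); rewrite ?H0 ?H1.
Qed.

Lemma in_symdiff (T : finType) (X Y : {set T}) x :
  (x \in symdiff X Y) = ((x \in X) != (x \in Y)).
Proof. by rewrite /symdiff !inE; case: (x \in X); case: (x \in Y). Qed.

Lemma Fb_dm b F : is_delta_matroid F -> Fb b F != set0 -> is_delta_matroid (Fb b F).
Proof.
move=> /andP [_ /forallP HF] Hne; apply/andP; split => //.
apply/forallP=> X; apply/implyP=> /imsetP [Z]; rewrite inE => /andP [HZ /eqP HmZ] ->.
apply/forallP=> Y; apply/implyP=> /imsetP [W]; rewrite inE => /andP [HW /eqP HmW] ->.
apply/forallP=> e; apply/implyP=> He.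
have := HF Z; rewrite HZ /= => /forallP /(_ W); rewrite HW /= => /forallP /(_ (lift ord_max e)).
have He' : lift ord_max e \in symdiff Z W by rewrite in_symdiff; rewrite in_symdiff !inE in He.
rewrite He' /= => /existsP [f /andP [Hf Hin]].
case: (unliftP ord_max f) Hf Hin => [f' ->| ->]; last first.
  by rewrite in_symdiff HmZ HmW eqxx.
move=> Hf Hin.
apply/existsP; exists f'; apply/andP; split.
  by rewrite in_symdiff !inE -in_symdiff.
apply/imsetP; exists (symdiff Z [set lift ord_max e; lift ord_max f']).
  rewrite inE Hin /= in_symdiff HmZ !inE.
  by rewrite !(negbTE (neq_lift _ _)) /=; case: (b).
by apply/setP=> i; rewrite !inE !(inj_eq (@lift_inj _ _)).
Qed.

Definition DM m := [set F : {set {set 'I_m}} | is_delta_matroid F].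

Lemma set0_notDM m : (set0 : {set {set 'I_m}}) \notin DM m.
Proof. by rewrite inE /is_delta_matroid eqxx. Qed.

Lemma Fb_nonempty F : is_delta_matroid F -> (Fb false F, Fb true F) != (set0, set0).
Proof.
move=> /andP [/set0Pn [Z HZ] _].
rewrite inF_Fb in HZ.
apply/negP => /eqP [H0 H1].
by move: HZ; case: (ord_max \in Z); rewrite ?H0 ?H1 inE.
Qed.

Lemma dm_rec : (num_delta_matroids n.+1).+1 <= (num_delta_matroids n).+1 * (num_delta_matroids n).+1.
Proof.
set A := set0 |: DM n.
have cA : #|A| = (num_delta_matroids n).+1 by rewrite cardsU1 set0_notDM.
have sub : [set (Fb false F, Fb true F) | F in DM n.+1] \subset setX A A :\ (set0, set0).
  apply/subsetP=> p /imsetP [F]; rewrite inE => HF ->.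
  rewrite !inE Fb_nonempty //=.
  apply/andP; split.
    by case: eqP => //= /eqP H; apply: Fb_dm.
  by case: eqP => //= /eqP H; apply: Fb_dm.
have := subset_leq_card sub.
rewrite card_imset; last exact: phi_inj.
have E := cardsD1 (set0, set0) (setX A A).
rewrite cardsX cA !inE eqxx /= in E.
by move=> H; rewrite E add1n ltnS; exact H.
Qed.

End Comb.

Lemma dm_pos m : 0 < num_delta_matroids m.
Proof.
rewrite /num_delta_matroids card_gt0; apply/set0Pn; exists [set set0].
rewrite inE /is_delta_matroid; apply/andP; split.
  by apply/set0Pn; exists set0; rewrite set11.
apply/forallP=> X; apply/implyP; rewrite inE => /eqP ->.
apply/forallP=> Y; apply/implyP; rewrite inE => /eqP ->.
by apply/forallP=> e; apply/implyP; rewrite /symdiff setDv setU0 inE.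
Qed.

Open Scope R_scope.

Lemma ln_le' x y : 0 < x -> x <= y -> ln x <= ln y.
Proof.
move=> Hx [H|->]; [left; exact: ln_increasing | lra].
Qed.

Definition D m := INR (num_delta_matroids m) + 1.

Lemma D_ge2 m : 2 <= D m.
Proof.
rewrite /D; have := dm_pos m => /leP H; apply le_INR in H; simpl in H; lra.
Qed.

Lemma D_rec m : D m.+1 <= D m * D m.
Proof.
rewrite /D -!S_INR -mult_INR; apply le_INR; apply/leP.
exact: dm_rec.
Qed.

Lemma ln2_pos : 0 < ln 2.
Proof. have := ln_lt_2; lra. Qed.

Lemma log2_pos x : 2 <= x -> 0 < log2 x.
Proof.
move=> H; rewrite /log2; apply Rdiv_lt_0_compat; last exact ln2_pos.
rewrite -ln_1; apply ln_increasing; lra.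
Qed.

Lemma step m : log2 (log2 (D m.+1)) <= 1 + log2 (log2 (D m)).
Proof.
have h2 := D_ge2 m; have h2' := D_ge2 m.+1.
have p := @log2_pos _ h2; have p' := @log2_pos _ h2'.
have l2 := ln2_pos.
have H1 : log2 (D m.+1) <= 2 * log2 (D m).
  rewrite /log2; apply Rmult_le_reg_r with (ln 2) => //.
  have -> : 2 * (ln (D m) / ln 2) * ln 2 = ln (D m * D m).
    rewrite ln_mult; [field; lra | lra | lra].
  have -> : ln (D m.+1) / ln 2 * ln 2 = ln (D m.+1) by field; lra.
  apply ln_le'; [lra | exact: D_rec].
have H2 : log2 (log2 (D m.+1)) <= log2 (2 * log2 (D m)).
  rewrite /log2; apply Rmult_le_compat_r; first (left; apply Rinv_0_lt_compat; lra).
  apply ln_le' => //.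
rewrite /log2 ln_mult in H2; [|lra|exact p].
rewrite /log2.
have -> : 1 = ln 2 / ln 2 by field; lra.
move: H2; rewrite /Rdiv Rmult_plus_distr_r; lra.
Qed.

Lemma iter_step (k j : nat) : log2 (log2 (D (addn k j))) <= INR j + log2 (log2 (D k)).
Proof.
elim: j => [|j IH]; first by rewrite addn0 /=; lra.
rewrite addnS S_INR; have := step (k + j); lra.
Qed.

Close Scope R_scope.

Theorem corollary3p6 (n k : nat) :
  (0 < k)%N -> (k <= n)%N ->
  (log2 (log2 (INR (num_delta_matroids n) + 1))
   <= INR n + log2 (log2 (INR (num_delta_matroids k) + 1)) - INR k)%R.
Proof.
move=> _ Hkn.
have := iter_step k (subn n k); rewrite subnKC // /D.
have : INR (subn n k) = (INR n - INR k)%R by rewrite -minus_INR; [reflexivity|apply/leP].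
lra.
Qed.
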